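(* Let $n\ge 2$, $F_2=\langle a,b\rangle$ free, $T=[a,b]$, and $R=R_{\mathrm{Heis}_n}$ the kernel of $F_2\to H_n$, $a\mapsto\alpha$, $b\mapsto\beta$. Then for all integers $i,j\ge 0$ the elements $T^n$ and $T^{-n}[a^ib^j,T]$ lie in $R$, and in the abelianization $R^{ab}=R/[R,R]$ (written additively, with the $H_n$-action described in the context) one has $$T^n=a^n-(a^n)^{\beta}-\sum_{k=0}^{n-2}\sum_{i=0}^{n-2-k}[a,T]^{\tau^k\alpha^i},$$ $$T^{-n}=b^n-(b^n)^{\alpha}-\sum_{k=0}^{n-2}\sum_{j=0}^{n-2-k}[b,T^{-1}]^{\tau^{-k}\beta^j},$$ $$[a^ib^j,T]=[b,T]^{\alpha^i\sum_{\lambda=0}^{j-1}\beta^\lambda}+[a,T]^{\sum_{\lambda=0}^{i-1}\alpha^\lambda}.$$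
   Context: $H_n$ is the group of $3\times3$ upper unitriangular matrices over $\mathbb{Z}/n\mathbb{Z}$, generated by $\alpha$ (entry $1$ at position $(1,2)$) and $\beta$ (entry $1$ at position $(2,3)$); $\tau=[\alpha,\beta]$. Commutator $[x,y]=xyx^{-1}y^{-1}$. Elements of $R$ are identified with their classes in $R^{ab}$. Since $R$ is normal in $F_2$ with $F_2/R\cong H_n$, $H_n$ acts on $R^{ab}$: for $x\in R^{ab}$ and $g\in H_n$, $x^g$ is the class of $\tilde g x\tilde g^{-1}$ for any lift $\tilde g\in F_2$ of $g$ (so $x^{gh}=(x^h)^g$); this is extended $\mathbb{Z}$-linearly to $\mathbb{Z}[H_n]$ by $x^{\sum c_g g}=\sum c_g x^g$. Here $\alpha,\beta,\tau$ are the images of $a,b,T$. *)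

(* Defs.v *)
From mathcomp Require Import all_boot all_algebra.
Set Implicit Arguments. Unset Strict Implicit. Unset Printing Implicit Defensive.
Import GRing.Theory.
Local Open Scope ring_scope.

(* A letter is (generator, inverted?): generator false = a, true = b. *)
Definition letter := (bool * bool)%type.
Definition word := seq letter.

Definition la : letter := (false, false).
Definition lb : letter := (true, false).
Definition linv (l : letter) : letter := (l.1, ~~ l.2).

Definition wa : word := [:: la].
Definition wb : word := [:: lb].

(* group operations on words (multiplication is concatenation) *)
Definition winv (w : word) : word := rev (map linv w).
Definition wexp (w : word) (k : nat) : word := flatten (nseq k w).

Definition wreduce (w : word) : word :=
  foldr (fun l acc => match acc with
                      | l' :: acc' => if l' == linv l then acc' else l :: acc
                      | [::] => [:: l]
                      end) [::] w.

Definition feq (x y : word) : Prop := wreduce x = wreduce y.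

Definition comm (x y : word) : word := x ++ y ++ winv x ++ winv y.

Definition wT : word := comm wa wb.

(* alpha = I + E_{12}, beta = I + E_{23} (0-indexed: (0,1) and (1,2)). *)
Definition lmat (n : nat) (l : letter) : 'M['Z_n]_3 :=
  let E := if l.1 then delta_mx 1 2%:R else delta_mx 0 1 in
  if l.2 then 1%:M - E else 1%:M + E.

Definition heis_eval (n : nat) (w : word) : 'M['Z_n]_3 :=
  foldr (fun l M => lmat n l *m M) 1%:M w.

Definition inR (n : nat) (w : word) : Prop := heis_eval n w = 1%:M.

(* [R,R]: elements of F_2 equal to a product of commutators of elements of R
   (this set is the subgroup generated by such commutators, since
   [x,y]^-1 = [y,x]). *)
Inductive inRR (n : nat) : word -> Prop :=
| RR_nil : inRR n [::]
| RR_cons x y z : inR n x -> inR n y -> inRR n z -> inRR n (comm x y ++ z)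
| RR_feq w w' : inRR n w -> feq w w' -> inRR n w'.

Definition abeq (n : nat) (x y : word) : Prop :=
  [/\ inR n x, inR n y & inRR n (x ++ winv y)].

(* x^g where u is a lift of g in F_2: the class of u x u^-1 *)
Definition act (x u : word) : word := u ++ x ++ winv u.
(* sums / differences in R^ab are represented by products / inverses *)
Definition wsum (s : seq word) : word := flatten s.
Definition wsub (x y : word) : word := x ++ winv y.

(* Main.v *)
Require Import Defs.
From mathcomp Require Import all_boot all_algebra.
From mathcomp Require Import ring.
From Stdlib Require Import Setoid Morphisms.
Set Implicit Arguments. Unset Strict Implicit. Unset Printing Implicit Defensive.
Import GRing.Theory.

Definition step (l : letter) (acc : word) : word :=
  match acc with
  | l' :: acc' => if l' == linv l then acc' else l :: acc
  | [::] => [:: l]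
  end.

Lemma wreduceE w : wreduce w = foldr step [::] w.
Proof. by []. Qed.

Fixpoint reduced (w : word) : bool :=
  match w with
  | l :: ((l' :: _) as w') => (l' != linv l) && reduced w'
  | _ => true
  end.

Lemma linvK l : linv (linv l) = l.
Proof. by case: l => ? []. Qed.

Lemma step_red l r : reduced r -> reduced (step l r).
Proof.
case: r => [|l' r] //=; case: eqP => [_|/eqP ne] /=.
  by case: r => // ? ? /andP[].
by move=> ->; rewrite ne.
Qed.

Lemma foldr_red acc x : reduced acc -> reduced (foldr step acc x).
Proof. by move=> h; elim: x => //= l x IH; apply: step_red. Qed.

Lemma step_cancel l s : reduced s -> step l (step (linv l) s) = s.
Proof.
case: s => [|l1 s] /=; first by rewrite eqxx.
rewrite linvK; case: eqP => [->|ne].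
  case: s => [|l2 s] //= /andP[ne2 _]; by rewrite (negbTE ne2).
by move=> _ /=; case: eqP.
Qed.

Lemma foldr_step acc r l : reduced acc ->
  foldr step acc (step l r) = step l (foldr step acc r).
Proof.
move=> ha; case: r => [|l' r] //=; case: eqP => [->|] //=.
by rewrite step_cancel // foldr_red.
Qed.

Lemma foldr_reduce acc x : reduced acc -> foldr step acc x = foldr step acc (wreduce x).
Proof.
move=> ha; elim: x => //= l x IH.
by rewrite IH -foldr_step.
Qed.

Lemma wreduce_cat x y : wreduce (x ++ y) = foldr step (wreduce y) x.
Proof. by rewrite /wreduce foldr_cat. Qed.

Lemma reduced_wreduce y : reduced (wreduce y).
Proof. exact: foldr_red. Qed.

Lemma feq_catl x y y' : feq y y' -> feq (x ++ y) (x ++ y').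
Proof. by rewrite /feq !wreduce_cat => ->. Qed.

Lemma feq_catr x x' y : feq x x' -> feq (x ++ y) (x' ++ y).
Proof.
rewrite /feq !wreduce_cat => e.
by rewrite (foldr_reduce _ (reduced_wreduce y)) e -foldr_reduce // reduced_wreduce.
Qed.

Lemma winv_cat u v : winv (u ++ v) = winv v ++ winv u.
Proof. by rewrite /winv map_cat rev_cat. Qed.

Lemma winvK u : winv (winv u) = u.
Proof. by rewrite /winv map_rev revK -map_comp map_id_in // => l _ /=; rewrite linvK. Qed.

Lemma winv_cons l u : winv (l :: u) = winv u ++ [:: linv l].
Proof. by rewrite /winv /= rev_cons cats1. Qed.

Lemma feq_cancel u v : feq (u ++ winv u ++ v) v.
Proof.
elim: u v => [|l u IH] v //=.
rewrite winv_cons -catA /feq /= -/(step _ _).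
have := IH (linv l :: v); rewrite /feq /= => ->.
by rewrite -/(step _ _) step_cancel // reduced_wreduce.
Qed.

Lemma feq_cancel' u v : feq (winv u ++ u ++ v) v.
Proof. by have := feq_cancel (winv u) v; rewrite winvK. Qed.

Local Open Scope ring_scope.


Definition HH (n : nat) := ('Z_n * 'Z_n * 'Z_n)%type.
Definition hmul n (p q : HH n) : HH n :=
  (p.1.1 + q.1.1, p.1.2 + q.1.2, p.2 + q.2 + p.1.1 * q.1.2).
Definition hinv n (p : HH n) : HH n := (- p.1.1, - p.1.2, - p.2 + p.1.1 * p.1.2).
Definition h0 n : HH n := (0, 0, 0).
Definition lc n (l : letter) : HH n :=
  match l with
  | (false, false) => (1, 0, 0)
  | (false, true) => (-1, 0, 0)
  | (true, false) => (0, 1, 0)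
  | (true, true) => (0, -1, 0)
  end.
Definition hv n (w : word) : HH n := foldr (fun l p => hmul (lc n l) p) (h0 n) w.

Definition mk n (p : HH n) : 'M['Z_n]_3 :=
  \matrix_(i, j) (if (i == j :> nat) then 1 else
                  if ((i : nat) == 0%N) && ((j : nat) == 1%N) then p.1.1 else
                  if ((i : nat) == 1%N) && ((j : nat) == 2%N) then p.1.2 else
                  if ((i : nat) == 0%N) && ((j : nat) == 2%N) then p.2 else 0).

Lemma mk_mul n (p q : HH n) : mk p *m mk q = mk (hmul p q).
Proof.
case: p => [[x y] z]; case: q => [[x' y'] z'].
apply/matrixP => i j; rewrite !mxE !big_ord_recr big_ord0 /= !mxE.
case: i => [[|[|[|i]]] Hi] //; case: j => [[|[|[|j]]] Hj] //=; ring.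
Qed.

Lemma lmat_mk n l : lmat n l = mk (lc n l).
Proof.
apply/matrixP => i j; rewrite /lmat !mxE.
case: l => [[] []] /=; rewrite !mxE;
case: i => [[|[|[|i]]] Hi] //; case: j => [[|[|[|j]]] Hj] //=; ring.
Qed.

Lemma mk0 n : mk (h0 n) = 1%:M.
Proof.
apply/matrixP => i j; rewrite !mxE.
case: i => [[|[|[|i]]] Hi] //; case: j => [[|[|[|j]]] Hj] //=.
Qed.

Lemma heis_mk n w : heis_eval n w = mk (hv n w).
Proof.
elim: w => [|l w IH] /=; first by rewrite mk0.
by rewrite IH lmat_mk mk_mul.
Qed.

Lemma mk_inj n (p q : HH n) : mk p = mk q -> p = q.
Proof.
case: p => [[x y] z]; case: q => [[x' y'] z'] e.
have e1 := congr1 (fun M : 'M_3 => M (Ordinal (isT : (0 < 3)%N)) (Ordinal (isT : (1 < 3)%N))) e.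
have e2 := congr1 (fun M : 'M_3 => M (Ordinal (isT : (1 < 3)%N)) (Ordinal (isT : (2 < 3)%N))) e.
have e3 := congr1 (fun M : 'M_3 => M (Ordinal (isT : (0 < 3)%N)) (Ordinal (isT : (2 < 3)%N))) e.
move: e1 e2 e3; rewrite /= !mxE /= => -> -> -> //.
Qed.

Lemma inRE n w : inR n w <-> hv n w = h0 n.
Proof.
rewrite /inR heis_mk -mk0; split; first exact: mk_inj.
by move=> ->.
Qed.

Lemma hmulA n (p q r : HH n) : hmul p (hmul q r) = hmul (hmul p q) r.
Proof.
case: p => [[x y] z]; case: q => [[x' y'] z']; case: r => [[x'' y''] z''].
rewrite /hmul /=; congr (_, _, _); ring.
Qed.

Lemma hmul0 n (p : HH n) : hmul (h0 n) p = p.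
Proof. case: p => [[x y] z]; rewrite /hmul /=; congr (_, _, _); ring. Qed.

Lemma hmulp0 n (p : HH n) : hmul p (h0 n) = p.
Proof. case: p => [[x y] z]; rewrite /hmul /=; congr (_, _, _); ring. Qed.

Lemma hv_cat n u v : hv n (u ++ v) = hmul (hv n u) (hv n v).
Proof. elim: u => [|l u IH] /=; first by rewrite hmul0. by rewrite IH hmulA. Qed.

Lemma hinvM n (p q : HH n) : hinv (hmul p q) = hmul (hinv q) (hinv p).
Proof.
case: p => [[x y] z]; case: q => [[x' y'] z'].
rewrite /hmul /hinv /=; congr (_, _, _); ring.
Qed.

Lemma lc_inv n l : lc n (linv l) = hinv (lc n l).
Proof. by case: l => [[] []]; rewrite /hinv /=; congr (_, _, _); ring. Qed.

Lemma hv_winv n u : hv n (winv u) = hinv (hv n u).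
Proof.
elim: u => [|l u IH].
  by rewrite /hinv /h0 /=; congr (_, _, _); ring.
rewrite /winv /= rev_cons -cats1 hv_cat -/(winv u) IH hinvM.
by rewrite [hv n [:: _]]/= hmulp0 -lc_inv.
Qed.

Lemma hmulV n (p : HH n) : hmul p (hinv p) = h0 n.
Proof. case: p => [[x y] z]; rewrite /hmul /hinv /h0 /=; congr (_, _, _); ring. Qed.

Lemma hmulVp n (p : HH n) : hmul (hinv p) p = h0 n.
Proof. case: p => [[x y] z]; rewrite /hmul /hinv /h0 /=; congr (_, _, _); ring. Qed.


Lemma hv_step n l r : hv n (step l r) = hmul (lc n l) (hv n r).
Proof.
case: r => [|l' r] //; rewrite /step; case: eqP => [->|] //.
by rewrite [hv n (_ :: r)]/hv -/(hv n r) hmulA lc_inv hmulV hmul0.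
Qed.

Lemma hv_wreduce n w : hv n (wreduce w) = hv n w.
Proof. elim: w => //= l w IH; by rewrite -/(step _ _) hv_step IH. Qed.

Lemma feq_hv n x y : feq x y -> hv n x = hv n y.
Proof. by move=> e; rewrite -hv_wreduce e hv_wreduce. Qed.

#[export] Instance feq_equiv : Equivalence feq.
Proof. split; rewrite /feq; [by [] | by move=> x y -> | by move=> x y z -> ->]. Qed.

#[export] Instance cat_feq : Proper (feq ==> feq ==> feq) (@cat letter).
Proof.
move=> x x' ex y y' ey; rewrite (feq_catl x ey); exact: feq_catr.
Qed.

Lemma feq_c1 u v : feq (u ++ winv u ++ v) v. Proof. exact: feq_cancel. Qed.
Lemma feq_c2 u v : feq (winv u ++ u ++ v) v. Proof. exact: feq_cancel'. Qed.
Lemma feq_c1' u : feq (u ++ winv u) [::].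
Proof. by have := feq_cancel u [::]; rewrite cats0. Qed.
Lemma feq_c2' u : feq (winv u ++ u) [::].
Proof. by have := feq_cancel' u [::]; rewrite cats0. Qed.

Lemma test u v x : feq (x ++ u ++ winv u ++ v) (x ++ v).
Proof. by rewrite feq_c1. Qed.

Lemma inRR_inR n w : inRR n w -> inR n w.
Proof.
elim => [|x y z /inRE hx /inRE hy _ /inRE hz|w1 w2 _ /inRE h e]; apply/inRE.
- by [].
- by rewrite /comm !hv_cat !hv_winv hx hy hz /= /hinv /h0 /hmul /=; congr (_, _, _); ring.
- by rewrite -(feq_hv n e).
Qed.

Lemma RR_feq0 n x : feq x [::] -> inRR n x.
Proof. by move=> e; apply: (RR_feq (RR_nil n)); symmetry. Qed.

Lemma RR_cat n x y : inRR n x -> inRR n y -> inRR n (x ++ y).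
Proof.
move=> hx; elim: hx y => [|x1 y1 z h1 h2 _ IH|w1 w2 _ IH e] y hy //.
- by rewrite -catA; apply: RR_cons => //; apply: IH.
- apply: (RR_feq (IH y hy)); exact: feq_catr.
Qed.

Lemma feq_winv x y : feq x y -> feq (winv x) (winv y).
Proof.
move=> e.
transitivity (winv x ++ (y ++ winv y)); first by rewrite feq_c1' cats0.
transitivity (winv x ++ (x ++ winv y)); last exact: feq_c2.
by apply: feq_catl; apply: feq_catr; symmetry.
Qed.

Lemma comm_winv x y : winv (comm x y) = comm y x.
Proof. by rewrite /comm !winv_cat !winvK !catA. Qed.

Lemma RR_winv n x : inRR n x -> inRR n (winv x).
Proof.
elim => [|x1 y1 z h1 h2 _ IH|w1 w2 _ IH e] //.
- by apply: RR_nil.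
- rewrite winv_cat comm_winv; apply: RR_cat => //.
  by rewrite -[comm y1 x1]cats0; apply: RR_cons => //; apply: RR_nil.
- by apply: (RR_feq IH); apply: feq_winv.
Qed.

Lemma inR_act n x u : inR n x -> inR n (act x u).
Proof. by move/inRE=> h; apply/inRE; rewrite /act !hv_cat h hmul0 hv_winv hmulV. Qed.

Lemma RR_act n x u : inRR n x -> inRR n (act x u).
Proof.
elim => [|x1 y1 z h1 h2 _ IH|w1 w2 _ IH e].
- by apply: RR_feq0; rewrite /act /= feq_c1'.
- apply: (RR_feq (RR_cons (inR_act u h1) (inR_act u h2) IH)).
  rewrite /comm /act !winv_cat !winvK -!catA.
  by rewrite !feq_c2.
- by apply: (RR_feq IH); rewrite /act e.
Qed.

Definition req n x y := inRR n (x ++ winv y).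

#[export] Instance req_equiv n : Equivalence (req n).
Proof.
split.
- by move=> x; apply: RR_feq0; rewrite feq_c1'.
- by move=> x y h; have := RR_winv h; rewrite winv_cat winvK.
- move=> x y z h1 h2; have := RR_cat h1 h2 => h.
  by apply: (RR_feq h); rewrite -catA feq_c2.
Qed.

#[export] Instance cat_req n : Proper (req n ==> req n ==> req n) (@cat letter).
Proof.
move=> x x' ex y y' ey; rewrite /req.
have := RR_cat (RR_act x ey) ex => h; apply: (RR_feq h).
by rewrite /act winv_cat -!catA feq_c2.
Qed.

Lemma feq_req n x y : feq x y -> req n x y.
Proof. by move=> e; apply: RR_feq0; rewrite e feq_c1'. Qed.

#[export] Instance feq_sub_req n : subrelation feq (req n).
Proof. move=> x y; exact: feq_req. Qed.

Lemma req_comm n r1 r2 : inR n r1 -> inR n r2 -> req n (r1 ++ r2) (r2 ++ r1).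
Proof.
move=> h1 h2; rewrite /req winv_cat -!catA.
by rewrite -[_ ++ _ ++ _ ++ _]cats0; apply: RR_cons => //; apply: RR_nil.
Qed.

Lemma req_inR n x y : req n x y -> inR n x -> inR n y.
Proof.
move=> /inRR_inR /inRE h /inRE hx; apply/inRE.
move: h; rewrite hv_cat hx hmul0 hv_winv => h.
by rewrite -[hv n y]hmulp0 -h hmulV.
Qed.


Lemma wexpSr w k : wexp w k.+1 = wexp w k ++ w.
Proof. rewrite /wexp; elim: k => [|k IH]; first by rewrite /= cats0.
change (w ++ flatten (nseq k.+1 w) = (w ++ flatten (nseq k w)) ++ w); by rewrite IH catA. Qed.

Lemma inR_comm_central n x z c : hv n z = (0, 0, c) -> inR n (comm x z).
Proof.
move=> hz; apply/inRE; rewrite /comm !hv_cat !hv_winv hz.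
case: (hv n x) => [[a b] d]; rewrite /hmul /hinv /h0 /=; congr (_, _, _); ring.
Qed.

Lemma inR_cat n x y : inR n x -> inR n y -> inR n (x ++ y).
Proof. by move=> /inRE hx /inRE hy; apply/inRE; rewrite hv_cat hx hy hmul0. Qed.

Lemma inR_winv n x : inR n x -> inR n (winv x).
Proof. by move=> /inRE hx; apply/inRE; rewrite hv_winv hx /hinv /h0 /=; congr (_, _, _); ring. Qed.

Lemma step_comm x z k :
  feq (comm (wexp x k.+1) z) (act (comm x z) (wexp x k) ++ comm (wexp x k) z).
Proof.
rewrite wexpSr /comm /act !winv_cat -!catA.
by rewrite !feq_c2.
Qed.

Lemma wsum_rcons (f : nat -> word) k :
  wsum [seq f l | l <- iota 0 k.+1] = wsum [seq f l | l <- iota 0 k] ++ f k.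
Proof. by rewrite -addn1 iotaD map_cat /wsum flatten_cat /= cats0. Qed.

Lemma L1 n x z c k : hv n z = (0, 0, c) ->
  req n (comm (wexp x k) z) (wsum [seq act (comm x z) (wexp x l) | l <- iota 0 k]).
Proof.
move=> hz; elim: k => [|k IH].
  by rewrite /comm /= feq_c1'; reflexivity.
have hW : inR n (wsum [seq act (comm x z) (wexp x l) | l <- iota 0 k]).
  exact: req_inR IH (inR_comm_central _ hz).
rewrite step_comm IH req_comm //; last exact: inR_act (inR_comm_central _ hz).
by rewrite wsum_rcons; reflexivity.
Qed.


Fixpoint Q (x S : word) (m : nat) : word :=
  match m with
  | 0 => [::]
  | m'.+1 => comm (wexp x m') S ++ act (Q x S m') S
  end.

Definition D (x S : word) (p : nat) : word :=
  wsum [seq act (comm x S) (wexp S k ++ wexp x i) | k <- iota 0 p, i <- iota 0 (p - k)].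

#[export] Instance act_req n : Proper (req n ==> eq ==> req n) act.
Proof. move=> X X' e u u' <-; rewrite /act e; reflexivity. Qed.

#[export] Instance act_feq : Proper (feq ==> eq ==> feq) act.
Proof. move=> X X' e u u' <-; rewrite /act e; reflexivity. Qed.

Lemma wexpS w k : wexp w k.+1 = w ++ wexp w k.
Proof. by []. Qed.

Lemma Qstep_feq X S Qm Sm :
  feq (act S X ++ Qm ++ Sm) ((X ++ S ++ winv X ++ winv S) ++ (S ++ Qm ++ winv S) ++ S ++ Sm).
Proof. by rewrite /act -!catA !feq_c2; reflexivity. Qed.

Lemma QE x y S m : S = comm x y ->
  feq (comm (wexp x m) y) (Q x S m ++ wexp S m).
Proof.
move=> hS; elim: m => [|m IH].
  by rewrite /comm /= feq_c1'.
rewrite step_comm -hS IH Qstep_feq [Q x S m.+1]/= /comm /act -!catA wexpS.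
reflexivity.
Qed.

Lemma Q_inR n x S c m : hv n S = (0, 0, c) -> inR n (Q x S m).
Proof.
move=> hS; elim: m => [|m IH] /=; first by apply/inRE.
by apply: inR_cat; [exact: inR_comm_central hS | exact: inR_act].
Qed.

Lemma act_cat_feq X Y u : feq (act (X ++ Y) u) (act X u ++ act Y u).
Proof. by rewrite /act -!catA feq_c2; reflexivity. Qed.

Lemma act_nil_feq u : feq (act [::] u) [::].
Proof. by rewrite /act /= feq_c1'; reflexivity. Qed.

Lemma act_wsum_map (g : nat -> word) s u :
  feq (act (wsum [seq g i | i <- s]) u) (wsum [seq act (g i) u | i <- s]).
Proof.
elim: s => [|i s IH]; first exact: act_nil_feq.
by rewrite [wsum _]/= act_cat_feq IH; reflexivity.
Qed.

Lemma act_f x S k i :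
  act (act (comm x S) (wexp S k ++ wexp x i)) S = act (comm x S) (wexp S k.+1 ++ wexp x i).
Proof. by rewrite /act wexpS !winv_cat -!catA. Qed.

Lemma shift_lemma x S q r m :
  feq (act (wsum [seq act (comm x S) (wexp S k ++ wexp x i) | k <- iota m r, i <- iota 0 (q - k)]) S)
      (wsum [seq act (comm x S) (wexp S k ++ wexp x i) | k <- iota m.+1 r, i <- iota 0 (q.+1 - k)]).
Proof.
elim: r m => [|r IH] m; first exact: act_nil_feq.
rewrite [iota m r.+1]/= [iota m.+1 r.+1]/= !allpairs_cons /wsum !flatten_cat -!/(wsum _).
rewrite act_cat_feq IH act_wsum_map subSS.
under eq_map do rewrite act_f.
reflexivity.
Qed.

Lemma Q_D n x S c p : hv n S = (0, 0, c) -> req n (Q x S p.+1) (D x S p).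
Proof.
move=> hS; elim: p => [|p IH].
  by rewrite /D /= /comm /= feq_c1' act_nil_feq; reflexivity.
have -> : Q x S p.+2 = comm (wexp x p.+1) S ++ act (Q x S p.+1) S by [].
rewrite IH (L1 x p.+1 hS) /D.
rewrite (shift_lemma x S p p 0).
rewrite [iota 0 p.+1]/= allpairs_cons /wsum flatten_cat subn0.
reflexivity.
Qed.

Lemma ident1 n x y S c : (1 < n)%N -> S = comm x y -> hv n S = (0, 0, c) ->
  inR n (wexp S n) ->
  abeq n (wexp S n)
    (wsub (wsub (wexp x n) (act (wexp x n) y))
      (wsum [seq act (comm x S) (wexp S k ++ wexp x i') | k <- iota 0 n.-1, i' <- iota 0 (n.-1 - k)])).
Proof.
move=> hn hSe hS hSn.
have e1 : wsub (wexp x n) (act (wexp x n) y) = comm (wexp x n) y.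
  by rewrite /wsub /act /comm !winv_cat winvK -!catA.
rewrite e1 -/(D x S n.-1).
have hQD : req n (Q x S n) (D x S n.-1).
  by have := Q_D x n.-1 hS; rewrite prednK // ltnW.
have hD : inR n (D x S n.-1) by apply: req_inR hQD (Q_inR _ _ hS).
have hr : req n (wsub (comm (wexp x n) y) (D x S n.-1)) (wexp S n).
  rewrite /wsub (QE n hSe) hQD req_comm.
  - by rewrite feq_c2; reflexivity.
  - exact: inR_cat.
  - exact: inR_winv.
have hr' : req n (wexp S n) (wsub (comm (wexp x n) y) (D x S n.-1)) by symmetry.
split => //; first exact: req_inR hr' hSn.
Qed.


Lemma comm_cat_feq X Y z : feq (comm (X ++ Y) z) (act (comm Y z) X ++ comm X z).
Proof. by rewrite /comm /act !winv_cat -!catA !feq_c2; reflexivity. Qed.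

Lemma ident3 n x y z c i j : hv n z = (0, 0, c) ->
  abeq n (comm (wexp x i ++ wexp y j) z)
    (wsum [seq act (comm y z) (wexp x i ++ wexp y l) | l <- iota 0 j]
     ++ wsum [seq act (comm x z) (wexp x l) | l <- iota 0 i]).
Proof.
move=> hz.
have hr : req n (comm (wexp x i ++ wexp y j) z)
    (wsum [seq act (comm y z) (wexp x i ++ wexp y l) | l <- iota 0 j]
     ++ wsum [seq act (comm x z) (wexp x l) | l <- iota 0 i]).
  rewrite comm_cat_feq (L1 y j hz) (L1 x i hz) act_wsum_map.
  have -> : [seq act (act (comm y z) (wexp y l)) (wexp x i) | l <- iota 0 j] =
            [seq act (comm y z) (wexp x i ++ wexp y l) | l <- iota 0 j].
    by apply: eq_map => l; rewrite /act !winv_cat -!catA.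
  reflexivity.
have hL : inR n (comm (wexp x i ++ wexp y j) z) by exact: inR_comm_central hz.
split => //; exact: req_inR hr hL.
Qed.

Lemma hv_wexp_central n w c k : hv n w = (0, 0, c) -> hv n (wexp w k) = (0, 0, c *+ k).
Proof.
move=> hw; elim: k => [|k IH]; first by rewrite /= mulr0n.
rewrite wexpS hv_cat hw IH /hmul /=; congr (_, _, _); rewrite ?mulrS; ring.
Qed.

Lemma hv_wT n : hv n wT = (0, 0, 1).
Proof. by rewrite /hv /= /hmul /h0 /=; congr (_, _, _); ring. Qed.

Lemma hv_wTi n : hv n (winv wT) = (0, 0, -1).
Proof. by rewrite /hv /= /hmul /h0 /=; congr (_, _, _); ring. Qed.

Lemma inR_pow n w c : (1 < n)%N -> hv n w = (0, 0, c) -> inR n (wexp w n).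
Proof.
move=> hn hw; apply/inRE; rewrite (hv_wexp_central n hw) -mulr_natr pchar_Zp //.
by rewrite mulr0.
Qed.

Theorem lemma2p11 (n : nat) (hn : (2 <= n)%N) (i j : nat) :
  [/\ inR n (wexp wT n),
      inR n (wexp (winv wT) n ++ comm (wexp wa i ++ wexp wb j) wT),
      (* T^n = a^n - (a^n)^beta - sum_{k=0}^{n-2} sum_{i=0}^{n-2-k} [a,T]^{tau^k alpha^i} *)
      abeq n (wexp wT n)
        (wsub (wsub (wexp wa n) (act (wexp wa n) wb))
              (wsum [seq act (comm wa wT) (wexp wT k ++ wexp wa i')
                    | k <- iota 0 n.-1, i' <- iota 0 (n.-1 - k)])),
      (* T^-n = b^n - (b^n)^alpha - sum_{k=0}^{n-2} sum_{j=0}^{n-2-k} [b,T^-1]^{tau^-k beta^j} *)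
      abeq n (wexp (winv wT) n)
        (wsub (wsub (wexp wb n) (act (wexp wb n) wa))
              (wsum [seq act (comm wb (winv wT)) (wexp (winv wT) k ++ wexp wb j')
                    | k <- iota 0 n.-1, j' <- iota 0 (n.-1 - k)]))
    & (* [a^i b^j, T] = [b,T]^{alpha^i sum_{l<j} beta^l} + [a,T]^{sum_{l<i} alpha^l} *)
      abeq n (comm (wexp wa i ++ wexp wb j) wT)
        (wsum [seq act (comm wb wT) (wexp wa i ++ wexp wb l) | l <- iota 0 j]
         ++ wsum [seq act (comm wa wT) (wexp wa l) | l <- iota 0 i])].
Proof.
have hT := hv_wT n; have hTi := hv_wTi n.
have pT := inR_pow hn hT; have pTi := inR_pow hn hTi.
split => //.
- by apply: inR_cat => //; exact: inR_comm_central hT.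
- by apply: (ident1 hn _ hT) => //.
- by apply: (ident1 hn _ hTi) => //.
- exact: ident3 hT.
Qed.
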